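(* Let $G=(V,E)$ be a $3$-uniform hypergraph. Consider the set of minimal canonical N-eigenvectors of the Laplacian tensor $\mathcal D-\mathcal A$ corresponding to the eigenvalue $0$, modulo the equivalence relation generated by $\mathbf x\sim e^{\theta\sqrt{-1}}\mathbf x$ ($\theta\in\mathbb R$) and $\mathbf x\sim\overline{\mathbf x}$ (complex conjugation); each equivalence class is a ''minimal canonical conjugated N-eigenvector pair''. Then the number of these classes equals the number of tripartite connected components of $G$ (counted with multiplicity as explained below).
   Context: A $3$-uniform hypergraph $G=(V,E)$ has vertex set $V=[n]$ ($n\ge3$) and nonempty edge set $E$ of $3$-element subsets; $E_i=\{e\in E:i\in e\}$, $d_i=|E_i|$. Connected components are maximal sets of vertices pairwise joined by chains of edges with consecutive edges intersecting; isolated vertices are also components. $\mathcal A$: $a_{i_1i_2i_3}=\frac12$ if $\{i_1,i_2,i_3\}\in E$, else $0$; $\mathcal D$ diagonal with $d_{iii}=d_i$; so $((\mathcal D-\mathcal A)\mathbf x^{2})_i=d_ix_i^{2}-\sum_{e\in E_i}\prod_{j\in e\setminus\{i\}}x_j$. A nonzero $\mathbf x\in\mathbb C^n$ is an eigenvector of $\mathcal T$ for $\lambda$ if $(\mathcal T\mathbf x^{2})_i=\lambda x_i^{2}$ for all $i$. It is an N-eigenvector if no nonzero complex multiple of $\mathbf x$ lies in $\mathbb R^n$; canonical if $\max_i|x_i|=1$; an eigenvector of eigenvalue $0$ is minimal if no eigenvector of eigenvalue $0$ has support strictly contained in its support. A tripartition of a vertex set $C$ (relative to the edges $e\subseteq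 C$) is an unordered partition $\{R,S,T\}$ of $C$ into three nonempty sets such that every edge $e\subseteq C$ either is contained in one of $R,S,T$ or meets each of $R,S,T$. A connected component $C$ of $G$ contributes to the count of tripartite connected components the number of its tripartitions (two tripartitions are the same only if they agree as unordered set partitions); the number of tripartite connected components of $G$ is the sum of these contributions over all connected components. *)

(* Defs.v *)
From Stdlib Require Import Relations.Relation_Definitions Relations.Relation_Operators.
From HB Require Import structures.
From mathcomp Require Import all_boot all_order all_algebra.
Set Implicit Arguments. Unset Strict Implicit. Unset Printing Implicit Defensive.
Import Order.TTheory GRing.Theory Num.Theory.
Local Open Scope ring_scope.

(* A hypergraph on vertex set 'I_n (= {0,..,n-1}, standing for [n]) is given
   by its edge set E : {set {set 'I_n}}. *)

Definition edges_at (n : nat) (E : {set {set 'I_n}}) (i : 'I_n) : {set {set 'I_n}} :=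
  [set e in E | i \in e].
Definition deg (n : nat) (E : {set {set 'I_n}}) (i : 'I_n) : nat := #|edges_at E i|.

Definition tensor3 (C : Type) (n : nat) := 'I_n -> 'I_n -> 'I_n -> C.

Definition adjT (C : numClosedFieldType) (n : nat) (E : {set {set 'I_n}}) : tensor3 C n :=
  fun i j k => if [set i; j; k] \in E then 2^-1 else 0.

Definition degT (C : numClosedFieldType) (n : nat) (E : {set {set 'I_n}}) : tensor3 C n :=
  fun i j k => if (i == j) && (j == k) then (deg E i)%:R else 0.

Definition lapT (C : numClosedFieldType) (n : nat) (E : {set {set 'I_n}}) : tensor3 C n :=
  fun i j k => degT C E i j k - adjT C E i j k.

Definition tapply (C : numClosedFieldType) (n : nat) (T : tensor3 C n) (x : 'I_n -> C)
  (i : 'I_n) : C := \sum_(j < n) \sum_(k < n) T i j k * x j * x k.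

Definition is_eigvec (C : numClosedFieldType) (n : nat) (T : tensor3 C n) (lam : C)
  (x : 'I_n -> C) : Prop :=
  (exists i, x i != 0) /\ forall i, tapply T x i = lam * x i ^+ 2.

Definition supp (C : numClosedFieldType) (n : nat) (x : 'I_n -> C) : {set 'I_n} :=
  [set i | x i != 0].

Definition is_N (C : numClosedFieldType) (n : nat) (x : 'I_n -> C) : Prop :=
  ~ exists c : C, c != 0 /\ forall i, c * x i \is Num.real.

Definition canonical (C : numClosedFieldType) (n : nat) (x : 'I_n -> C) : Prop :=
  (forall i, `|x i| <= 1) /\ exists i, `|x i| = 1.

Definition minimal0 (C : numClosedFieldType) (n : nat) (T : tensor3 C n) (x : 'I_n -> C) : Prop :=
  is_eigvec T 0 x /\ ~ exists y, is_eigvec T 0 y /\ supp y \proper supp x.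

Definition min_can_N (C : numClosedFieldType) (n : nat) (E : {set {set 'I_n}})
  (x : 'I_n -> C) : Prop :=
  minimal0 (lapT C E) x /\ canonical x /\ is_N x.

Definition basic_step (C : numClosedFieldType) (n : nat) (x y : 'I_n -> C) : Prop :=
  (exists c : C, `|c| = 1 /\ y = (fun i => c * x i)) \/ y = (fun i => (x i)^*).

Definition pair_equiv (C : numClosedFieldType) (n : nat) : relation ('I_n -> C) :=
  clos_refl_sym_trans _ (@basic_step C n).

Definition adjv (n : nat) (E : {set {set 'I_n}}) : rel 'I_n :=
  fun i j => [exists e in E, (i \in e) && (j \in e)].

(* connected components (isolated vertices are singleton components) *)
Definition components (n : nat) (E : {set {set 'I_n}}) : {set {set 'I_n}} :=
  [set [set j | connect (adjv E) i j] | i : 'I_n].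

Definition tripartition (n : nat) (E : {set {set 'I_n}}) (Cc : {set 'I_n})
  (P : {set {set 'I_n}}) : bool :=
  [&& partition P Cc, #|P| == 3 &
      [forall e in E, (e \subset Cc) ==>
         ([exists B in P, e \subset B] || [forall B in P, e :&: B != set0])]].

Definition num_tripartite (n : nat) (E : {set {set 'I_n}}) : nat :=
  (\sum_(Cc in components E) #|[set P | tripartition E Cc P]|)%N.

(* Main.v *)
Require Import Defs.
From HB Require Import structures.
From mathcomp Require Import all_boot all_order all_algebra.
Import Order.TTheory GRing.Theory Num.Theory.
Local Open Scope ring_scope.
From mathcomp Require Import ring zify.
From Stdlib Require Import FunctionalExtensionality.

Section Omega.
Variable C : numClosedFieldType.

Definition om : C := (-1 + sqrtC (-3)) / 2.

Lemma om2 : om ^+ 2 + om + 1 = 0.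
Proof.
have hs : sqrtC (-3 : C) ^+ 2 = -3 by rewrite sqrtCK.
have h2 : (2 : C) != 0 by rewrite pnatr_eq0.
have -> : om ^+ 2 + om + 1 = (sqrtC (-3 : C) ^+ 2 + 3) / 4.
  by rewrite /om; field.
by rewrite sqrtCK addNr mul0r.
Qed.

Lemma om3 : om ^+ 3 = 1.
Proof.
apply/eqP; rewrite -subr_eq0.
have -> : om ^+ 3 - 1 = (om - 1) * (om ^+ 2 + om + 1) by ring.
by rewrite om2 mulr0.
Qed.

Lemma om_neq0 : om != 0.
Proof. by apply/eqP=> h; move: om3; rewrite h expr0n /= => /eqP; rewrite eq_sym oner_eq0. Qed.

Lemma om_neq1 : om != 1.
Proof.
apply/eqP=> h; move: om2; rewrite h expr1n => /eqP.
have -> : 1 + 1 + 1 = 3 :> C by ring.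
by rewrite pnatr_eq0.
Qed.

Lemma om2_neq1 : om ^+ 2 != 1.
Proof.
apply/eqP=> h; move: om3; rewrite exprS h mulr1 => h'.
by move: om_neq1; rewrite h' eqxx.
Qed.

Lemma om_neq_om2 : om != om ^+ 2.
Proof.
apply/eqP=> h; move: om3; rewrite exprS -h -expr2 -h => h'.
by move: om_neq1; rewrite h' eqxx.
Qed.

Lemma om_notreal : om \isn't Num.real.
Proof.
apply/negP=> hr.
have hr2 : 2 * om + 1 \is Num.real := realD (realM (realn _ 2) hr) (real1 _).
move: hr2; rewrite realEsqr.
have -> : (2 * om + 1) ^+ 2 = 4 * (om ^+ 2 + om + 1) - 3 by ring.
rewrite om2 mulr0 sub0r oppr_ge0 => h.
have h3 : (0 : C) < 3 by rewrite ltr0n.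
by move: (lt_le_trans h3 h); rewrite ltxx.
Qed.

Lemma norm_om : `|om| = 1.
Proof.
have : `|om| ^+ 3 = 1 by rewrite -normrX om3 normr1.
by move/eqP; rewrite pexprn_eq1 // => /eqP.
Qed.

Lemma conj_om : om^* = om ^+ 2.
Proof.
have h : om * om^* = 1 by rewrite -normCK norm_om expr1n.
apply: (mulfI om_neq0); by rewrite h -exprS om3.
Qed.

Lemma cube_roots (z : C) : z ^+ 3 = 1 -> [\/ z = 1, z = om | z = om ^+ 2].
Proof.
move=> hz.
have e : (z - 1) * (z - om) * (z - om ^+ 2) =
   z ^+ 3 - 1 - (z - 1) * (om ^+ 2 + om + 1) * z + (z - 1) * (om ^+ 3 - 1) by ring.
rewrite om2 om3 hz subrr !mulr0 mul0r subr0 addr0 in e.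
move/eqP: e; rewrite !mulf_eq0 !subr_eq0 => /orP[/orP[]|] /eqP ->.
- by constructor 1.
- by constructor 2.
- by constructor 3.
Qed.

End Omega.
Section G.
Variables (n : nat) (E : {set {set 'I_n}}).
Hypothesis hE : forall e, e \in E -> #|e| = 3%N.

Lemma set3_eq (i j k a b : 'I_n) : i != a -> i != b -> a != b ->
  ([set i; j; k] == [set i; a; b]) = ((j == a) && (k == b)) || ((j == b) && (k == a)).
Proof.
move=> hia hib hab.
apply/idP/idP.
- move/eqP/setP=> H.
  move: (H j) (H k) (H a) (H b); rewrite !inE !eqxx ?orbT /= => /esym Hj /esym Hk Ha Hb.
  have hai : (a == i) = false by rewrite eq_sym (negbTE hia).
  have hbi : (b == i) = false by rewrite eq_sym (negbTE hib).
  have hba : (b == a) = false by rewrite eq_sym (negbTE hab).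
  move: Ha Hb; rewrite hai hbi /=.
  case/orP: Hj => [/orP[]|] /eqP ?; case/orP: Hk => [/orP[]|] /eqP ?; subst;
    rewrite ?eqxx ?hai ?hbi ?hba ?(negbTE hab) ?(negbTE hia) ?(negbTE hib) ?orbT ?andbT //=.
- case/orP=> /andP[/eqP -> /eqP ->] //.
  apply/eqP/setP=> x; rewrite !inE.
  by case: (x == i) (x == a) (x == b) => [] [] [].
Qed.

Lemma edge_split (e : {set 'I_n}) (i : 'I_n) : #|e| = 3%N -> i \in e ->
  exists a b, [/\ i != a, i != b, a != b & e = [set i; a; b]].
Proof.
move=> h3 hi.
have : #|e :\ i| == 2%N by move: (cardsD1 i e); rewrite hi h3 add1n => -[<-].
case/cards2P=> a [b [hab He]].
have ha : a \in e :\ i by rewrite He !inE eqxx.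
have hb : b \in e :\ i by rewrite He !inE eqxx orbT.
move: ha hb; rewrite !inE => /andP[hai _] /andP[hbi _].
exists a, b; split; rewrite 1?[i == _]eq_sym //.
by rewrite -[in LHS](setD1K hi) He; apply/setP=> x; rewrite !inE orbA.
Qed.

Lemma edge_third (e : {set 'I_n}) (i j : 'I_n) : #|e| = 3%N -> i \in e -> j \in e ->
  i != j -> exists k, e = [set i; j; k].
Proof.
move=> h3 hi hj hij.
have [a [b [hia hib hab He]]] := edge_split _ _ h3 hi.
move: hj; rewrite He !inE => /orP[/orP[]|] /eqP hj.
- by rewrite hj eqxx in hij.
- by exists b; rewrite hj.
- exists a; rewrite hj; apply/setP=> x; rewrite !inE.
  by case: (x == i) (x == a) (x == b) => [] [] [].
Qed.

Lemma sum_eq1 (T : finType) (s : T) (A : {pred T}) :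
  (\sum_(e in A) (s == e) = (s \in A) :> nat)%N.
Proof.
case: (boolP (s \in A)) => h.
  rewrite (bigD1 s) //= eqxx big1 // => e /andP[_ /negbTE].
  by rewrite eq_sym => ->.
rewrite big1 // => e he; case: eqP => // hs.
by rewrite hs he in h.
Qed.

Lemma sum_pred1 (b : 'I_n) : (\sum_(k < n) (k == b) = 1 :> nat)%N.
Proof. by rewrite (bigD1 b) //= eqxx big1 // => k /negbTE ->. Qed.

Lemma count_pairs (e : {set 'I_n}) (i : 'I_n) : #|e| = 3%N -> i \in e ->
  (\sum_(j < n) \sum_(k < n) ([set i; j; k] == e) = 2 :> nat)%N.
Proof.
move=> h3 hi.
have [a [b [hia hib hab ->]]] := edge_split _ _ h3 hi.
under eq_bigr => j _ do under eq_bigr => k _ do rewrite set3_eq //.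
have hor : forall j k : 'I_n, (((j == a) && (k == b)) || ((j == b) && (k == a)) : nat)
    = ((((j == a) && (k == b)) : nat) + ((j == b) && (k == a)))%N.
  move=> j k; case: (eqVneq j a) => [->|] /=.
    by rewrite (negbTE hab) /= ?orbF ?addn0.
  by rewrite add0n.
under eq_bigr => j _ do under eq_bigr => k _ do rewrite hor.
under eq_bigr => j _ do rewrite big_split /=.
rewrite big_split /=.
have h1 : forall c d : 'I_n, (\sum_(j < n) \sum_(k < n) ((j == c) && (k == d)) = 1 :> nat)%N.
  move=> c d; rewrite (bigD1 c) //= [X in (_ + X)%N](eq_bigr (fun _ => 0%N)); last first.
    by move=> j /negbTE hj; rewrite big1 // => k _; rewrite hj.
  rewrite big1_eq addn0; under eq_bigr => k _ do rewrite eqxx /=.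
  exact: sum_pred1.
by rewrite !h1.
Qed.

Lemma count_all (i : 'I_n) :
  (\sum_(j < n) \sum_(k < n) ([set i; j; k] \in E) = 2 * deg E i :> nat)%N.
Proof.
have step : forall j k : 'I_n, (([set i; j; k] \in E) : nat) =
   (\sum_(e in edges_at E i) ([set i; j; k] == e))%N.
  move=> j k; rewrite sum_eq1 /edges_at inE !inE eqxx /=.
  by rewrite andbT.
under eq_bigr => j _ do under eq_bigr => k _ do rewrite step.
under eq_bigr => j _ do rewrite exchange_big /=.
rewrite exchange_big /=.
rewrite (eq_bigr (fun _ => 2%N)); last first.
  move=> e; rewrite /edges_at inE => /andP[he hie].
  exact: count_pairs _ _ (hE _ he) hie.
by rewrite sum_nat_const /deg mulnC.
Qed.

Lemma sum_adj (C : numClosedFieldType) (i : 'I_n) :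
  \sum_(j < n) \sum_(k < n) adjT C E i j k = (deg E i)%:R.
Proof.
have e1 : forall j k, adjT C E i j k = ((([set i; j; k] \in E) : nat)%:R) * 2^-1.
  by move=> j k; rewrite /adjT; case: ([set i; j; k] \in E); rewrite ?mul1r ?mul0r.
under eq_bigr => j _ do under eq_bigr => k _ do rewrite e1.
under eq_bigr => j _ do rewrite -mulr_suml -natr_sum.
rewrite -mulr_suml -natr_sum count_all natrM mulrAC divff ?mul1r //.
by rewrite pnatr_eq0.
Qed.

Lemma tapply_lap (C : numClosedFieldType) (x : 'I_n -> C) (i : 'I_n) :
  tapply (lapT C E) x i =
  (deg E i)%:R * x i ^+ 2 - \sum_(j < n) \sum_(k < n) adjT C E i j k * x j * x k.
Proof.
rewrite /tapply /lapT.
under eq_bigr => j _ do under eq_bigr => k _ do rewrite !mulrBl.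
under eq_bigr => j _ do rewrite sumrB.
rewrite sumrB; congr (_ - _).
rewrite (bigD1 i) //= [X in _ + X](eq_bigr (fun _ => 0)); last first.
  move=> j /negbTE hj; rewrite big1 // => k _.
  by rewrite /degT eq_sym hj /= !mul0r.
rewrite big1_eq addr0 (bigD1 i) //= [X in _ + X](eq_bigr (fun _ => 0)); last first.
  by move=> k /negbTE hk; rewrite /degT eqxx /= eq_sym hk !mul0r.
rewrite big1_eq.
by rewrite addr0 /degT !eqxx /= -mulrA -expr2.
Qed.

End G.

Section A.
Variables (C : numClosedFieldType) (n : nat) (E : {set {set 'I_n}}).
Hypothesis hE : forall e, e \in E -> #|e| = 3%N.

Definition comp (i : 'I_n) : {set 'I_n} := [set j | connect (adjv E) i j].

Lemma adjv_sym : symmetric (adjv E).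
Proof.
move=> i j; rewrite /adjv; apply/existsP/existsP=> -[e /andP[he /andP[h1 h2]]];
  by exists e; rewrite he h1 h2.
Qed.

Lemma connect_symE i j : connect (adjv E) i j = connect (adjv E) j i.
Proof. exact: (sym_connect_sym adjv_sym). Qed.

Lemma comp_refl i : i \in comp i.
Proof. by rewrite inE connect0. Qed.

Lemma comp_eq i j : j \in comp i -> comp j = comp i.
Proof.
rewrite inE => hij; apply/setP=> v; rewrite !inE.
apply/idP/idP=> h; first exact: connect_trans hij h.
by rewrite connect_symE in hij; exact: connect_trans hij h.
Qed.

Lemma comp_adj i u v : u \in comp i -> adjv E u v -> v \in comp i.
Proof. rewrite !inE => hu huv; exact: connect_trans hu (connect1 huv). Qed.

Lemma adj_edge (e : {set 'I_n}) u v : e \in E -> u \in e -> v \in e -> adjv E u v.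
Proof. by move=> he hu hv; apply/existsP; exists e; rewrite he hu hv. Qed.

Lemma comp_edge i (e : {set 'I_n}) u v : e \in E -> u \in e -> v \in e ->
  (u \in comp i) = (v \in comp i).
Proof.
move=> he hu hv; apply/idP/idP=> h.
  exact: comp_adj h (adj_edge _ _ _ he hu hv).
exact: comp_adj h (adj_edge _ _ _ he hv hu).
Qed.

Lemma path_ind (F : 'I_n -> Prop) (Cc : {set 'I_n}) :
  (forall u v, u \in Cc -> adjv E u v -> F u -> v \in Cc /\ F v) ->
  forall p u, u \in Cc -> F u -> path (adjv E) u p -> F (last u p).
Proof.
move=> hstep; elim=> [|a p IH] u hu hF //= /andP[hua hp].
have [ha hFa] := hstep _ _ hu hua hF.
exact: IH ha hFa hp.
Qed.

Lemma comp_ind (F : 'I_n -> Prop) i0 : F i0 ->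
  (forall u v, u \in comp i0 -> adjv E u v -> F u -> F v) ->
  forall w, w \in comp i0 -> F w.
Proof.
move=> h0 hstep w; rewrite inE => /connectP[p hp ->].
apply: (@path_ind F (comp i0)) => //; last exact: comp_refl.
move=> u v hu huv hFu; split; first exact: comp_adj hu huv.
exact: hstep hu huv hFu.
Qed.

Definition eig0 (x : 'I_n -> C) := forall i, tapply (lapT C E) x i = 0.

Lemma eig0_sum x : eig0 x -> forall i,
  \sum_(j < n) \sum_(k < n) adjT C E i j k * x j * x k = (deg E i)%:R * x i ^+ 2.
Proof.
move=> h i; move: (h i); rewrite (@tapply_lap n E C x i) => /eqP.
by rewrite subr_eq0 => /eqP <-.
Qed.

Lemma adj_ge0 i j k : 0 <= adjT C E i j k.
Proof. by rewrite /adjT; case: ifP => _ //; rewrite invr_ge0 ler0n. Qed.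

Lemma key x i j k : eig0 x -> (forall v, `|x v| <= `|x i|) -> x i != 0 ->
  [set i; j; k] \in E -> x j * x k = x i ^+ 2.
Proof.
move=> hx hmax hxi he.
pose w := fun j k => x j * x k / x i ^+ 2.
have hxi2 : x i ^+ 2 != 0 by rewrite expf_neq0.
have hsum : \sum_(j < n) \sum_(k < n) adjT C E i j k * w j k
          = \sum_(j < n) \sum_(k < n) adjT C E i j k.
  rewrite (@sum_adj n E hE C i).
  have -> : \sum_(j < n) \sum_(k < n) adjT C E i j k * w j k =
     (\sum_(j < n) \sum_(k < n) adjT C E i j k * x j * x k) / x i ^+ 2.
    rewrite mulr_suml; apply: eq_bigr => j' _; rewrite mulr_suml.
    by apply: eq_bigr => k' _; rewrite /w !mulrA.
  by rewrite eig0_sum // mulfK.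
have hpos : 0 < `|x i| by rewrite normr_gt0.
have hw : forall j k, `|w j k| <= 1.
  move=> j' k'; rewrite /w normrM normfV normrX normrM.
  rewrite ler_pdivrMr ?exprn_gt0 // mul1r expr2.
  by apply: ler_pM => //; rewrite normr_ge0.
have hle : forall j k, `|adjT C E i j k * w j k| <= adjT C E i j k.
  move=> j' k'; rewrite normrM ger0_norm ?adj_ge0 //.
  by apply: ler_piMr; rewrite ?adj_ge0 ?hw.
have houter : forall j, \sum_(k < n) adjT C E i j k * w j k = \sum_(k < n) adjT C E i j k.
  move=> j'; apply: (normC_sum_upper _ hsum) => // j'' _.
  apply: le_trans (ler_norm_sum _ _ _) _.
  by apply: ler_sum => k' _; apply: hle.
have hinner : adjT C E i j k * w j k = adjT C E i j k.
  apply: (normC_sum_upper _ (houter j)) => // k' _; exact: hle.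
have ha : adjT C E i j k = 2^-1 by rewrite /adjT he.
rewrite ha in hinner.
have h2 : (2^-1 : C) != 0 by rewrite invr_eq0 pnatr_eq0.
have : w j k = 1 by apply: (mulfI h2); rewrite hinner mulr1.
by rewrite /w => /divr1_eq.
Qed.

Lemma key_norm x i j k : eig0 x -> (forall v, `|x v| <= `|x i|) -> x i != 0 ->
  [set i; j; k] \in E -> `|x j| = `|x i|.
Proof.
move=> hx hmax hxi he.
have h := @key x i j k hx hmax hxi he.
have hn : `|x j| * `|x k| = `|x i| * `|x i| by rewrite -normrM h normrX expr2.
have hpos : 0 < `|x i| by rewrite normr_gt0.
move: (hmax j); rewrite le_eqVlt => /orP[/eqP //|hlt].
have : `|x j| * `|x k| < `|x i| * `|x i|.
  apply: le_lt_trans (_ : `|x j| * `|x i| < _).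
    by apply: ler_wpM2l; rewrite ?normr_ge0 ?hmax.
  by rewrite ltr_pM2r.
by rewrite hn ltxx.
Qed.

Lemma propagate x i0 : eig0 x -> (forall v, `|x v| <= `|x i0|) -> x i0 != 0 ->
  forall w, w \in comp i0 -> `|x w| = `|x i0|.
Proof.
move=> hx hmax hx0.
apply: comp_ind => // u v hu /existsP[e /andP[he /andP[hue hve]]] hFu.
case: (eqVneq u v) => [<- //|huv].
have [k hek] := @edge_third n e u v (hE _ he) hue hve huv.
rewrite -hFu; apply: (@key_norm x u v k hx) => //.
- by move=> v'; rewrite hFu.
- by rewrite -normr_eq0 hFu normr_eq0.
- by rewrite -hek.
Qed.

Lemma exists_max (f : 'I_n -> C) (i : 'I_n) : (forall v, f v \is Num.real) ->
  exists m, forall v, f v <= f m.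
Proof.
move=> hr.
suff : forall s : seq 'I_n, exists m, forall v, v \in s -> f v <= f m.
  by case/(_ (enum 'I_n))=> m hm; exists m => v; apply: hm; rewrite mem_enum.
elim=> [|a s [m hm]]; first by exists i.
case/orP: (real_leVge (hr a) (hr m)) => h.
  by exists m => v; rewrite inE => /orP[/eqP ->|]; [exact: h | exact: hm].
exists a => v; rewrite inE => /orP[/eqP -> //|hv].
exact: le_trans (hm _ hv) h.
Qed.

Lemma supp_comp y : eig0 y -> (exists v, y v != 0) ->
  exists i, comp i \subset supp y.
Proof.
move=> hy [v hv].
have [m hm] := @exists_max (fun v => `|y v|) v (fun v => normr_real _).
have hm0 : y m != 0.
  apply/negP=> /eqP h; move: (hm v); rewrite h normr0 normr_le0.
  by rewrite (negbTE hv).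
exists m; apply/subsetP=> w hw; rewrite inE -normr_eq0.
by rewrite (@propagate y m hy hm hm0 w hw) normr_eq0.
Qed.

Definition good (x : 'I_n -> C) (Cc : {set 'I_n}) :=
  [/\ forall v, v \notin Cc -> x v = 0, forall v, v \in Cc -> `|x v| = 1 &
      forall i j k, i \in Cc -> [set i; j; k] \in E -> x j * x k = x i ^+ 2].

Lemma good_eig0 x i0 : good x (comp i0) -> eig0 x.
Proof.
move=> [h0 h1 h2] v; rewrite (@tapply_lap n E C x v); apply/eqP; rewrite subr_eq0; apply/eqP.
case: (boolP (v \in comp i0)) => hv.
  rewrite -(@sum_adj n E hE C v) mulr_suml; apply: eq_bigr => j _; rewrite mulr_suml.
  apply: eq_bigr => k _; rewrite /adjT; case: ifP => he; last by rewrite !mul0r.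
  by rewrite -mulrA (h2 v).
rewrite h0 // exprS mul0r mulr0 big1 // => j _; rewrite big1 // => k _.
rewrite /adjT; case: ifP => he; last by rewrite !mul0r.
have hj : j \notin comp i0.
  have hv1 : v \in [set v; j; k] by rewrite !inE eqxx.
  have hj1 : j \in [set v; j; k] by rewrite !inE eqxx orbT.
  by rewrite -(@comp_edge i0 _ v j he hv1 hj1).
by rewrite (h0 j hj) mulr0 mul0r.
Qed.

Lemma supp_good x i0 : good x (comp i0) -> supp x = comp i0.
Proof.
move=> [h0 h1 h2]; apply/setP=> v; rewrite inE.
case: (boolP (v \in comp i0)) => hv.
  by rewrite -normr_eq0 h1 // oner_eq0.
by rewrite h0 // eqxx.
Qed.

Lemma good_min x i0 : good x (comp i0) -> minimal0 (lapT C E) x /\ canonical x.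
Proof.
move=> hg; have [h0 h1 h2] := hg.
have hi0 : x i0 != 0 by rewrite -normr_eq0 h1 ?comp_refl // oner_eq0.
split; last first.
  split; last by exists i0; rewrite h1 ?comp_refl.
  move=> v; case: (boolP (v \in comp i0)) => hv; first by rewrite h1.
  by rewrite h0 // normr0 ler01.
split.
  split; first by exists i0.
  by move=> i; rewrite mul0r (@good_eig0 x i0 hg).
move=> [y [[hy0 hy] hprop]].
have hey : eig0 y by move=> i; rewrite hy mul0r.
have [i hi] := @supp_comp y hey hy0.
move: hprop; rewrite properE => /andP[hsub hnot].
have hii : i \in comp i0.
  rewrite -(@supp_good x i0 hg); apply: (subsetP hsub); apply: (subsetP hi).
  exact: comp_refl.
rewrite (@comp_eq i0 i hii) in hi.
by rewrite (@supp_good x i0 hg) hi in hnot.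
Qed.

Lemma set3_card (i j k : 'I_n) : #|[set i; j; k]| = 3%N ->
  [/\ i != j, i != k & j != k].
Proof.
have -> : [set i; j; k] = i |: [set j; k].
  by apply/setP=> x; rewrite !inE orbA.
rewrite cardsU1 cards2 !inE negb_or.
case: (i != j); case: (i != k); case: (j != k) => //=.
Qed.

Lemma om_pow_inj (a b : nat) : (a < 3)%N -> (b < 3)%N ->
  (om C ^+ a == om C ^+ b) = (a == b).
Proof.
have h1 := negbTE (@om_neq1 C); have h2 := negbTE (@om2_neq1 C).
have h3 := negbTE (@om_neq_om2 C).
have h1' : (1 == om C) = false by rewrite eq_sym.
have h2' : (1 == om C ^+ 2) = false by rewrite eq_sym.
have h3' : (om C ^+ 2 == om C) = false by rewrite eq_sym.
case: a => [|[|[|a]]] //; case: b => [|[|[|b]]] //= _ _;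
  by rewrite ?expr0 ?expr1 ?eqxx ?h1 ?h2 ?h3 ?h1' ?h2' ?h3'.
Qed.

Definition vec (P : {set {set 'I_n}}) : 'I_n -> C :=
  fun v => if v \in cover P then om C ^+ (index (pblock P v) (enum P)) else 0.

Section Vec.
Variables (P : {set {set 'I_n}}) (Cc : {set 'I_n}).
Hypothesis hP : partition P Cc.
Hypothesis hP3 : #|P| = 3%N.

Lemma covP : cover P = Cc.
Proof. exact: cover_partition. Qed.

Lemma trivP : trivIset P.
Proof. by case/and3P: hP. Qed.

Lemma nset0P : set0 \notin P.
Proof. by case/and3P: hP. Qed.

Definition idx v := index (pblock P v) (enum P).

Lemma idx_lt v : v \in Cc -> (idx v < 3)%N.
Proof.
move=> hv; rewrite /idx -hP3 cardE index_mem mem_enum.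
by apply: pblock_mem; rewrite covP.
Qed.

Lemma idx_eq u v : u \in Cc -> v \in Cc -> (idx u == idx v) = (pblock P u == pblock P v).
Proof.
move=> hu hv; apply/eqP/eqP => [h|]; last by rewrite /idx => ->.
apply: (index_inj set0 _ _ h); rewrite mem_enum; apply: pblock_mem; by rewrite covP.
Qed.

Lemma vec_in v : v \in Cc -> vec P v = om C ^+ idx v.
Proof. by move=> hv; rewrite /vec covP hv. Qed.

Lemma vec_out v : v \notin Cc -> vec P v = 0.
Proof. by move=> hv; rewrite /vec covP (negbTE hv). Qed.

Lemma vec_eq u v : u \in Cc -> v \in Cc ->
  (vec P u == vec P v) = (pblock P u == pblock P v).
Proof.
move=> hu hv; rewrite !vec_in // om_pow_inj ?idx_lt //; exact: idx_eq.
Qed.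

Lemma mem_coverP B w : B \in P -> w \in B -> w \in Cc.
Proof.
move=> hB hw; rewrite -covP; exact: (subsetP (bigcup_sup B hB)) w hw.
Qed.

Lemma two_same (a b c : 'I_n) : a \in Cc -> b \in Cc -> c \in Cc ->
  (forall B, B \in P -> [set a; b; c] :&: B != set0) ->
  pblock P a != pblock P b.
Proof.
move=> ha hb hc hall; apply/negP=> /eqP hab.
have hBa : pblock P a \in P by apply: pblock_mem; rewrite covP.
have hBc : pblock P c \in P by apply: pblock_mem; rewrite covP.
have : (0 < #|P :\ pblock P a :\ pblock P c|)%N.
  move: (cardsD1 (pblock P a) P) (cardsD1 (pblock P c) (P :\ pblock P a)).
  rewrite hP3 hBa !inE hBc andbT; move=> h1 h2; rewrite h2 in h1; move: h1; case: (pblock P c != pblock P a) => /= h1; clear h2.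
  - set X := #|_| in h1 *. lia.
  - set X := #|_| in h1 *. lia.
rewrite lt0n cards_eq0 => /set0Pn[B']; rewrite !inE => /and3P[h1 h2 hB'].
have := hall B' hB'; case/set0Pn=> w; rewrite !inE => /andP[hw hwB].
have := def_pblock trivP hB' hwB.
by case/orP: hw => [/orP[]|] /eqP ->; rewrite -?hab => hh; 
  [move: h2 | move: h2 | move: h1]; rewrite hh eqxx.
Qed.

End Vec.
Arguments covP {P Cc}. Arguments trivP {P Cc}. Arguments nset0P {P Cc}.
Arguments idx_lt {P Cc}. Arguments idx_eq {P Cc}. Arguments vec_in {P Cc}.
Arguments vec_out {P Cc}. Arguments vec_eq {P Cc}. Arguments mem_coverP {P Cc}.
Arguments two_same {P Cc}.

Lemma set3_perm1 (i j k : 'I_n) : [set j; k; i] = [set i; j; k].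
Proof. by apply/setP=> x; rewrite !inE; case: (x == i) (x == j) (x == k) => [] [] []. Qed.

Lemma set3_perm2 (i j k : 'I_n) : [set i; k; j] = [set i; j; k].
Proof. by apply/setP=> x; rewrite !inE; case: (x == i) (x == j) (x == k) => [] [] []. Qed.

Lemma set3_perm3 (i j k : 'I_n) : [set j; i; k] = [set i; j; k].
Proof. by apply/setP=> x; rewrite !inE; case: (x == i) (x == j) (x == k) => [] [] []. Qed.

Lemma edge_comp i0 (i j k : 'I_n) : i \in comp i0 -> [set i; j; k] \in E ->
  j \in comp i0 /\ k \in comp i0.
Proof.
move=> hi he; split.
  by rewrite -(@comp_edge i0 _ i j he) // !inE eqxx ?orbT.
by rewrite -(@comp_edge i0 _ i k he) // !inE eqxx ?orbT.
Qed.

Lemma vec_good P i0 : tripartition E (comp i0) P -> good (vec P) (comp i0).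
Proof.
case/and3P=> hP /eqP hP3 hedges.
split.
- by move=> v hv; rewrite (vec_out hP).
- by move=> v hv; rewrite (vec_in hP) // normrX norm_om expr1n.
move=> i j k hi he.
have [hij hik hjk] := @set3_card i j k (hE _ he).
have [hj hk] := @edge_comp i0 i j k hi he.
have hsub : [set i; j; k] \subset comp i0.
  apply/subsetP=> w hw; have : (w == i) || (w == j) || (w == k) by move: hw; rewrite !inE.
  by case/orP=> [/orP[]|] /eqP ->.
move/forallP: hedges => /(_ [set i; j; k]); rewrite he hsub /= => /orP[].
  case/existsP=> B /andP[hB hsB].
  have pb : forall w, w \in [set i; j; k] -> pblock P w = B.
    by move=> w hw; apply: def_pblock (trivP hP) hB (subsetP hsB w hw).
  rewrite !(vec_in hP) // /idx !pb ?expr2 // !inE eqxx ?orbT //.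
move/forallP=> hall'.
have hall : forall B, B \in P -> [set i; j; k] :&: B != set0.
  by move=> B hB; move: (hall' B); rewrite hB.
have d1 := two_same hP hP3 _ _ _ hi hj hk hall.
have d2 : pblock P i != pblock P k.
  by apply: (two_same hP hP3 _ _ _ hi hk hj) => B hB; rewrite set3_perm2 hall.
have d3 : pblock P j != pblock P k.
  by apply: (two_same hP hP3 _ _ _ hj hk hi) => B hB; rewrite set3_perm1 hall.
rewrite -(idx_eq hP _ _ hi hj) in d1; rewrite -(idx_eq hP _ _ hi hk) in d2.
rewrite -(idx_eq hP _ _ hj hk) in d3.
have li := idx_lt hP hP3 _ hi; have lj := idx_lt hP hP3 _ hj; have lk := idx_lt hP hP3 _ hk.
have hmod : ((idx P j + idx P k) %% 3 = (idx P i * 2) %% 3)%N.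
  move: d1 d2 d3 li lj lk; set a := idx P i; set b := idx P j; set c := idx P k.
  move=> d1 d2 d3 li lj lk; lia.
rewrite !(vec_in hP) // -exprD -exprM.
by rewrite -(expr_mod _ (om3 C)) hmod (expr_mod _ (om3 C)).
Qed.

Lemma vec_N P i0 : tripartition E (comp i0) P -> is_N (vec P).
Proof.
case/and3P=> hP /eqP hP3 _.
have hs : size (enum P) = 3%N by rewrite -cardE.
pose B0 := nth set0 (enum P) 0; pose B1 := nth set0 (enum P) 1.
have hB0 : B0 \in P by rewrite -mem_enum mem_nth // hs.
have hB1 : B1 \in P by rewrite -mem_enum mem_nth // hs.
have ne : forall B, B \in P -> B != set0.
  by move=> B hB; apply/negP=> /eqP h; move: (nset0P hP); rewrite -h hB.
have [w0 hw0] := set0Pn _ (ne _ hB0).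
have [w1 hw1] := set0Pn _ (ne _ hB1).
have hc0 := mem_coverP hP _ _ hB0 hw0; have hc1 := mem_coverP hP _ _ hB1 hw1.
have i0' : idx P w0 = 0%N.
  by rewrite /idx (def_pblock (trivP hP) hB0 hw0) index_uniq ?hs ?enum_uniq.
have i1' : idx P w1 = 1%N.
  by rewrite /idx (def_pblock (trivP hP) hB1 hw1) index_uniq ?hs ?enum_uniq.
move=> [c [hc hr]].
have r0 := hr w0; rewrite (vec_in hP) // i0' expr0 mulr1 in r0.
have r1 := hr w1; rewrite (vec_in hP) // i1' expr1 in r1.
have : om C \is Num.real.
  by rewrite -(mulKf hc (om C)); apply: realM => //; rewrite realV.
by rewrite (negbTE (@om_notreal C)).
Qed.

Lemma vec_min P i0 : tripartition E (comp i0) P -> min_can_N E (vec P).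
Proof.
move=> ht; have [h1 h2] := @good_min (vec P) i0 (@vec_good P i0 ht).
by split; [|split] => //; exact: (@vec_N P i0 ht).
Qed.

Definition Qr (x : 'I_n -> C) u v := (x u != 0) && (x u == x v).

Lemma Q_step x y : basic_step x y -> forall u v, Qr x u v = Qr y u v.
Proof.
case=> [[c [hc ->]]|->] u v; rewrite /Qr.
  have hc0 : c != 0 by rewrite -normr_eq0 hc oner_eq0.
  by rewrite mulf_eq0 (negbTE hc0) /= (inj_eq (mulfI hc0)).
by rewrite conjC_eq0 (inj_eq (can_inj conjCK)).
Qed.

Lemma Q_equiv x y : pair_equiv x y -> forall u v, Qr x u v = Qr y u v.
Proof.
elim=> [a b hab u v| a u v| a b _ IH u v| a b c _ IH1 _ IH2 u v].
- exact: Q_step hab u v.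
- by [].
- by rewrite IH.
- by rewrite IH1 IH2.
Qed.

Definition fQ (x : 'I_n -> C) := [set [set v | Qr x u v] | u in [set u | Qr x u u]].

Lemma fQ_equiv x y : pair_equiv x y -> fQ x = fQ y.
Proof.
move=> h; have hQ := @Q_equiv x y h.
have h1 : [set u | Qr x u u] = [set u | Qr y u u] by apply/setP=> u; rewrite !inE hQ.
rewrite /fQ h1; apply: eq_imset => u; apply/setP=> v; rewrite !inE hQ.
by [].
Qed.

Lemma fQ_vec P i0 : tripartition E (comp i0) P -> fQ (vec P) = P.
Proof.
case/and3P=> hP /eqP hP3 _.
have hne : forall u, u \in comp i0 -> vec P u != 0.
  by move=> u hu; rewrite (vec_in hP) // expf_neq0 // om_neq0.
have h1 : [set u | Qr (vec P) u u] = comp i0.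
  apply/setP=> u; rewrite inE /Qr eqxx andbT.
  case: (boolP (u \in comp i0)) => hu; first by rewrite hne.
  by rewrite (vec_out hP) // eqxx.
rewrite /fQ h1.
rewrite (eq_in_imset (g := pblock P)); last first.
  move=> u hu; apply/setP=> v; rewrite inE /Qr hne //=.
  case: (boolP (v \in comp i0)) => hv.
    rewrite (vec_eq hP) // eq_pblock ?(covP hP) //; exact: (trivP hP).
  rewrite (vec_out hP _ hv) (negbTE (hne _ hu)).
  apply/esym/negP=> hvp; move: hv; rewrite -(covP hP).
  have := mem_pblock P v.
  by rewrite (same_pblock (trivP hP) hvp) => <-; rewrite hvp.
apply/setP=> B; apply/imsetP/idP => [[u hu ->]|hB].
  by apply: pblock_mem; rewrite (covP hP).
have : B != set0 by apply/negP=> /eqP h; move: (nset0P hP); rewrite -h hB.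
case/set0Pn=> w hw; exists w; first exact: mem_coverP hP _ _ hB hw.
by rewrite (def_pblock (trivP hP) hB hw).
Qed.

Lemma min_good x : min_can_N E x -> exists i0, good x (comp i0).
Proof.
move=> [[[hx0 hx] hmin] [[hle [i0 hi0]] hN]].
have hx' : eig0 x by move=> i; rewrite hx mul0r.
have hmax : forall v, `|x v| <= `|x i0| by move=> v; rewrite hi0.
have hi0' : x i0 != 0 by rewrite -normr_eq0 hi0 oner_eq0.
have hn1 : forall w, w \in comp i0 -> `|x w| = 1.
  by move=> w hw; rewrite (@propagate x i0 hx' hmax hi0' w hw).
have hrel : forall i j k, i \in comp i0 -> [set i; j; k] \in E -> x j * x k = x i ^+ 2.
  move=> i j k hi he; apply: (@key x i j k hx') => //.
    by move=> v; rewrite (hn1 i hi).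
  by rewrite -normr_eq0 (hn1 i hi) oner_eq0.
exists i0; split => //.
move=> v hv; apply/eqP/negPn/negP => hxv.
pose y := fun v => if v \in comp i0 then x v else 0.
have hgy : good y (comp i0).
  split.
  - by move=> w hw; rewrite /y (negbTE hw).
  - by move=> w hw; rewrite /y hw hn1.
  - move=> i j k hi he; have [hj hk] := @edge_comp i0 i j k hi he.
    by rewrite /y hi hj hk (hrel i j k hi he).
apply: hmin; exists y; split.
  split; first by exists i0; rewrite /y comp_refl.
  by move=> i; rewrite mul0r (@good_eig0 y i0 hgy).
rewrite (@supp_good y i0 hgy) properE; apply/andP; split.
  apply/subsetP=> w hw; rewrite inE -normr_eq0 hn1 // oner_eq0 //.
apply/negP=> /subsetP /(_ v); rewrite inE hxv => /(_ isT).
by rewrite (negbTE hv).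
Qed.

Lemma good_rel x i0 a b d : good x (comp i0) -> a \in comp i0 -> [set a; b; d] \in E ->
  [/\ x b * x d = x a ^+ 2, x a * x d = x b ^+ 2 & x a * x b = x d ^+ 2].
Proof.
move=> [_ _ h] ha he; have [hb hd] := @edge_comp i0 a b d ha he.
split; first exact: h.
  by apply: h => //; rewrite set3_perm3.
by apply: h => //; rewrite -set3_perm1.
Qed.

Lemma good_nz x i0 w : good x (comp i0) -> w \in comp i0 -> x w != 0.
Proof. by move=> [_ h _] hw; rewrite -normr_eq0 h // oner_eq0. Qed.

Lemma good_rainbow x i0 a b d : good x (comp i0) -> a \in comp i0 ->
  [set a; b; d] \in E -> x a != x b -> x d != x a /\ x d != x b.
Proof.
move=> hg ha he hab; have [hb hd] := @edge_comp i0 a b d ha he.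
have [r1 r2 r3] := @good_rel x i0 a b d hg ha he.
split; apply/negP=> /eqP hd'.
  rewrite hd' expr2 in r3; move/(mulfI (@good_nz x i0 a hg ha)): r3 => h.
  by rewrite h eqxx in hab.
rewrite hd' expr2 in r3; move/(mulIf (@good_nz x i0 b hg hb)): r3 => h.
by rewrite h eqxx in hab.
Qed.

Lemma good_cube x i0 w : good x (comp i0) -> w \in comp i0 -> x w ^+ 3 = x i0 ^+ 3.
Proof.
move=> hg; move: w; apply: (@comp_ind (fun w => x w ^+ 3 = x i0 ^+ 3) i0) => //.
move=> u v hu /existsP[e /andP[he /andP[hue hve]]] hF.
case: (eqVneq u v) => [<- //|huv].
have [k hek] := @edge_third n e u v (hE _ he) hue hve huv.
rewrite hek in he.
have [r1 r2 _] := @good_rel x i0 u v k hg hu he.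
by rewrite -hF (exprS (x v) 2) (exprS (x u) 2) -r1 -r2 mulrCA.
Qed.

Lemma cover3 (a b d w : C) : a ^+ 3 = 1 -> b ^+ 3 = 1 -> d ^+ 3 = 1 -> w ^+ 3 = 1 ->
  a != b -> a != d -> b != d -> (w == a) || (w == b) || (w == d).
Proof.
move=> ha hb hd hw.
case: (@cube_roots C a ha) => ->; case: (@cube_roots C b hb) => ->;
  case: (@cube_roots C d hd) => ->;
  case: (@cube_roots C w hw) => ->; rewrite ?eqxx ?orbT //.
Qed.

Lemma good_N_nonconst x i0 : good x (comp i0) -> is_N x ->
  exists u v k, [/\ u \in comp i0, [set u; v; k] \in E & x u != x v].
Proof.
move=> hg hN.
case: (boolP [exists u, exists v, exists k,
   (u \in comp i0) && ([set u; v; k] \in E) && (x u != x v)]).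
  by case/existsP=> u /existsP[v /existsP[k /andP[/andP[h1 h2] h3]]]; exists u, v, k.
rewrite negb_exists => /forallP hno.
have hconst : forall w, w \in comp i0 -> x w = x i0.
  apply: (@comp_ind (fun w => x w = x i0) i0) => //.
  move=> u v hu /existsP[e /andP[he /andP[hue hve]]] hF.
  case: (eqVneq u v) => [<- //|huv].
  have [k hek] := @edge_third n e u v (hE _ he) hue hve huv.
  move: (hno u); rewrite negb_exists => /forallP /(_ v).
  rewrite negb_exists => /forallP /(_ k).
  by rewrite hu -hek he /= negbK => /eqP <-.
have hc := @good_nz x i0 i0 hg (comp_refl i0).
exfalso; apply: hN; exists (x i0)^-1; split; first by rewrite invr_eq0.
move=> v; case: (boolP (v \in comp i0)) => hv.
  by rewrite hconst // mulVf // real1.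
by have [h0 _ _] := hg; rewrite (h0 v hv) mulr0 real0.
Qed.

Lemma classify_trip x i0 : good x (comp i0) -> is_N x ->
  exists P, tripartition E (comp i0) P /\
    forall p q, p \in comp i0 -> q \in comp i0 -> (q \in pblock P p) = (x p == x q).
Proof.
move=> hg hN.
have nz : forall w, w \in comp i0 -> x w != 0 by move=> w; exact: good_nz hg.
have [u [v [k [hu he huv]]]] := @good_N_nonconst x i0 hg hN.
have [hv hk] := @edge_comp i0 u v k hu he.
have [hku hkv] := @good_rainbow x i0 u v k hg hu he huv.
pose c := x i0.
have hc : c != 0 := nz i0 (comp_refl i0).
have hcube : forall w, w \in comp i0 -> (x w / c) ^+ 3 = 1.
  move=> w hw; rewrite exprMn exprVn (@good_cube x i0 w hg hw) divff //.
  exact: expf_neq0.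
have hdiv : forall p q : C, (p / c == q / c) = (p == q).
  by move=> p q; rewrite (inj_eq (mulIf (invr_neq0 hc))).
have hcov : forall a b d w, a \in comp i0 -> b \in comp i0 -> d \in comp i0 ->
    w \in comp i0 -> x a != x b -> x a != x d -> x b != x d ->
    (x w == x a) || (x w == x b) || (x w == x d).
  move=> a b d w ha hb hd hw hab had hbd.
  have := @cover3 _ _ _ _ (hcube a ha) (hcube b hb) (hcube d hd) (hcube w hw).
  by rewrite !hdiv; apply.
pose R := fun p q : 'I_n => x p == x q.
have hR : {in comp i0 & &, equivalence_rel R}.
  by move=> a b d _ _ _; split => [|/eqP hab]; rewrite /R ?hab.
pose P := equivalence_partition R (comp i0).
have hP : partition P (comp i0) := equivalence_partitionP hR.
have hpb : forall p q, p \in comp i0 -> q \in comp i0 -> (q \in pblock P p) = (x p == x q).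
  by move=> p q hp hq; rewrite (pblock_equivalence_partition hR hp hq).
exists P; split => //.
pose L a := [set y in comp i0 | x a == x y].
have memL : forall a y, (y \in L a) = (y \in comp i0) && (x a == x y).
  by move=> a y; rewrite /L [in LHS]inE.
have hLP : forall a, a \in comp i0 -> L a \in P.
  by move=> a ha; apply: imset_f.
have hPL : forall B, B \in P -> exists2 a, a \in comp i0 & B = L a.
  by move=> B /imsetP[a ha ->]; exists a.
have hLeq : forall a b, x a = x b -> L a = L b.
  by move=> a b hab; apply/setP=> y; rewrite !memL hab.
have hLne : forall a b, b \in comp i0 -> x a != x b -> L a != L b.
  move=> a b hb hab; apply/negP=> /eqP /setP /(_ b); rewrite !memL hb eqxx /=.
  by rewrite (negbTE hab).
have huk : x u != x k by rewrite eq_sym.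
have hvk : x v != x k by rewrite eq_sym.
have hPeq : P = [set L u; L v; L k].
  apply/setP=> B; rewrite !inE; apply/idP/idP.
    move=> /hPL[w hw ->].
    by case/orP: (hcov u v k w hu hv hk hw huv huk hvk) => [/orP[]|] /eqP /hLeq ->;
      rewrite eqxx ?orbT.
  by case/orP=> [/orP[]|] /eqP ->; apply: hLP.
have hP3 : #|P| = 3%N.
  have -> : P = L u |: [set L v; L k].
    by rewrite hPeq; apply/setP=> B; rewrite !inE orbA.
  rewrite cardsU1 cards2 !inE negb_or (hLne _ _ hv huv) (hLne _ _ hk huk).
  by rewrite (hLne _ _ hk hvk).
rewrite /tripartition hP hP3 eqxx /=.
apply/forallP=> e; apply/implyP=> heE; apply/implyP=> hsub.
have : (0 < #|e|)%N by rewrite (hE _ heE).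
rewrite lt0n cards_eq0 => /set0Pn[a hae].
have [b [d [hab hbd' hbd he']]] := @edge_split n e a (hE _ heE) hae.
have ha : a \in comp i0 by apply: (subsetP hsub).
rewrite he' in heE hsub *.
have [hb hd] := @edge_comp i0 a b d ha heE.
case: (eqVneq (x a) (x b)) => hxab.
  have [_ r2 _] := @good_rel x i0 a b d hg ha heE.
  have hxad : x a = x d.
    by apply: (mulfI (nz _ ha)); rewrite r2 -hxab expr2.
  apply/orP; left; apply/existsP; exists (L a); rewrite hLP //=.
  apply/subsetP=> y hy; have : (y == a) || (y == b) || (y == d) by move: hy; rewrite !inE.
  by case/orP=> [/orP[]|] /eqP ->; rewrite memL ?ha ?hb ?hd -?hxab -?hxad eqxx.
have [hda hdb] := @good_rainbow x i0 a b d hg ha heE hxab.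
apply/orP; right; apply/forallP=> B; apply/implyP=> /hPL[w hw ->].
have had : x a != x d by rewrite eq_sym.
have hbd2 : x b != x d by rewrite eq_sym.
apply/set0Pn.
case/orP: (hcov a b d w ha hb hd hw hxab had hbd2) => [/orP[]|] /eqP hw'.
- by exists a; rewrite in_setI memL ha hw' !inE !eqxx.
- by exists b; rewrite in_setI memL hb hw' !inE !eqxx ?orbT.
- by exists d; rewrite in_setI memL hd hw' !inE !eqxx ?orbT.
Qed.

Lemma classify_equiv x i0 P : good x (comp i0) -> tripartition E (comp i0) P ->
  (forall p q, p \in comp i0 -> q \in comp i0 -> (q \in pblock P p) = (x p == x q)) ->
  pair_equiv x (vec P).
Proof.
move=> hg ht hpb.
have [h0 h1 _] := hg.
case/and3P: ht => hP /eqP hP3 _.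
have hs : size (enum P) = 3%N by rewrite -cardE.
pose B t := nth set0 (enum P) t.
have hB : forall t, (t < 3)%N -> B t \in P.
  by move=> t ht; rewrite -mem_enum mem_nth // hs.
have hne : forall t, (t < 3)%N -> exists w, w \in B t.
  move=> t ht; apply/set0Pn; apply/negP=> /eqP h.
  by move: (nset0P hP); rewrite -h hB.
have [w0 hw0] := hne 0%N isT.
have [w1 hw1] := hne 1%N isT.
have [w2 hw2] := hne 2%N isT.
have hwc : forall t w, (t < 3)%N -> w \in B t -> w \in comp i0.
  by move=> t w ht hw; exact: mem_coverP hP _ _ (hB t ht) hw.
have hpbB : forall t w, (t < 3)%N -> w \in B t -> pblock P w = B t.
  by move=> t w ht hw; apply: def_pblock (trivP hP) (hB t ht) hw.
have hval : forall w t w', w \in comp i0 -> idx P w = t -> (t < 3)%N -> w' \in B t ->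
    x w = x w'.
  move=> w t w' hw hidx ht hw'.
  have hBt : B t = pblock P w.
    rewrite /B -hidx /idx nth_index // mem_enum; apply: pblock_mem; by rewrite (covP hP).
  apply/eqP; rewrite -hpb //; last exact: hwc ht hw'.
  by rewrite -hBt.
have hdist : forall s t ws wt, (s < 3)%N -> (t < 3)%N -> ws \in B s -> wt \in B t ->
    x ws = x wt -> s = t.
  move=> s t ws wt hs' ht' hws hwt hx.
  have hin : wt \in pblock P ws by rewrite hpb ?hx ?eqxx //; [exact: hwc hs' hws | exact: hwc ht' hwt].
  have := same_pblock (trivP hP) hin; rewrite (hpbB _ _ hs' hws) (hpbB _ _ ht' hwt) => hst.
  apply/eqP; rewrite -(nth_uniq set0 _ _ (enum_uniq P)) ?hs //; apply/eqP; exact: (esym hst).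
pose z0 := x w0; pose z1 := x w1; pose z2 := x w2.
have hz0 : z0 != 0 by apply: (@good_nz x i0 w0 hg); exact: hwc 0%N _ isT hw0.
have hcube : forall w, w \in comp i0 -> (x w / z0) ^+ 3 = 1.
  move=> w hw; rewrite exprMn exprVn (@good_cube x i0 w hg hw).
  rewrite /z0 (@good_cube x i0 w0 hg (hwc 0%N _ isT hw0)) divff //.
  by rewrite expf_neq0 // (@good_nz x i0 i0 hg (comp_refl i0)).
have d01 : z1 / z0 != 1.
  apply/negP=> /eqP h; have := divr1_eq h => /esym.
  by move/(hdist 0%N 1%N w0 w1 isT isT hw0 hw1).
have d02 : z2 / z0 != 1.
  apply/negP=> /eqP h; have := divr1_eq h => /esym.
  by move/(hdist 0%N 2%N w0 w2 isT isT hw0 hw2).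
have d12 : z1 / z0 != z2 / z0.
  apply/negP=> /eqP h; have := mulIf (invr_neq0 hz0) h.
  by move/(hdist 1%N 2%N w1 w2 isT isT hw1 hw2).
have e1 : z1 = z0 * (z1 / z0) by rewrite mulrC divfK.
have e2 : z2 = z0 * (z2 / z0) by rewrite mulrC divfK.
have hxw : forall w, w \in comp i0 -> [\/ idx P w = 0%N /\ x w = z0,
     idx P w = 1%N /\ x w = z1 | idx P w = 2%N /\ x w = z2].
  move=> w hw; have := idx_lt hP hP3 _ hw.
  case hi: (idx P w) => [|[|[|m]]] // _.
  - by constructor 1; split => //; exact: hval hi isT hw0.
  - by constructor 2; split => //; exact: hval hi isT hw1.
  - by constructor 3; split => //; exact: hval hi isT hw2.
have hnz0 : `|z0| = 1 by apply: h1; exact: hwc 0%N _ isT hw0.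
have om3' := @om3 C.
case: (@cube_roots C _ (hcube w1 (hwc 1%N _ isT hw1))) => r1.
- by rewrite -/z1 r1 eqxx in d01.
- case: (@cube_roots C _ (hcube w2 (hwc 2%N _ isT hw2))) => r2.
  + by rewrite -/z2 r2 eqxx in d02.
  + by rewrite -/z1 -/z2 r1 r2 eqxx in d12.
  have hx : x = (fun w => z0 * vec P w).
    apply: functional_extensionality => w.
    case: (boolP (w \in comp i0)) => hw; last by rewrite h0 // (vec_out hP _ hw) mulr0.
    rewrite (vec_in hP _ hw).
    case: (hxw w hw) => -[-> ->]; rewrite ?expr0 ?mulr1 ?expr1 //.
      by rewrite e1 -/z1 r1.
    by rewrite e2 -/z2 r2.
  apply: Relation_Operators.rst_sym; apply: Relation_Operators.rst_step; left; exists z0; split => //.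
- case: (@cube_roots C _ (hcube w2 (hwc 2%N _ isT hw2))) => r2.
  + by rewrite -/z2 r2 eqxx in d02.
  + have hx : x = (fun w => z0 * (vec P w)^*).
      apply: functional_extensionality => w.
      case: (boolP (w \in comp i0)) => hw.
        rewrite (vec_in hP _ hw) rmorphXn /= (@conj_om C).
        case: (hxw w hw) => -[-> ->]; rewrite ?expr0 ?mulr1 ?expr1 //.
          by rewrite e1 -/z1 r1.
        by rewrite e2 -/z2 r2 -exprM (_ : (2 * 2 = 3 + 1)%N) // exprD om3' mul1r expr1.
      by rewrite h0 // (vec_out hP _ hw) conjC0 mulr0.
    apply: Relation_Operators.rst_sym.
    apply: (@Relation_Operators.rst_trans _ _ _ (fun w => (vec P w)^*)); apply: Relation_Operators.rst_step.
      by right.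
    by left; exists z0; split.
  + by rewrite -/z1 -/z2 r1 r2 eqxx in d12.
Qed.

End A.

Lemma card_set_sum (T : finType) (Q : pred T) : #|[set x | Q x]| = (\sum_x (Q x : nat))%N.
Proof.
rewrite -sum1_card big_mkcond /=; apply: eq_bigr => x _; rewrite inE.
by case: (Q x).
Qed.

Lemma comps_mem (n : nat) (E : {set {set 'I_n}}) Cc :
  Cc \in components E -> exists i0, Cc = comp n E i0.
Proof. by case/imsetP=> i _ ->; exists i. Qed.

Lemma num_trip_card (n : nat) (E : {set {set 'I_n}}) :
  num_tripartite E =
  #|[set P : {set {set 'I_n}} | [exists Cc in components E, tripartition E Cc P]]|.
Proof.
rewrite card_set_sum /num_tripartite.
under eq_bigr => Cc _ do rewrite card_set_sum.
rewrite exchange_big /=; apply: eq_bigr => P _.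
case: (boolP [exists Cc in components E, tripartition E Cc P]) => h.
  case/existsP: h => Cc0 /andP[hC0 ht0].
  rewrite (bigD1 Cc0) //= ht0 big1 // => Cc /andP[_ hne].
  apply/eqP; rewrite eqb0; apply/negP=> ht.
  case/and3P: ht0 => /cover_partition h0 _ _; case/and3P: ht => /cover_partition h1 _ _.
  by rewrite -h0 -h1 eqxx in hne.
rewrite big1 // => Cc hC; apply/eqP; rewrite eqb0; apply/negP=> ht.
by move/negP: h; apply; apply/existsP; exists Cc; rewrite hC ht.
Qed.

Theorem proposition6p1 (C : numClosedFieldType) (n : nat) (E : {set {set 'I_n}}) :
  (3 <= n)%N -> E != set0 -> (forall e, e \in E -> #|e| = 3%N) ->
  exists reps : 'I_(num_tripartite E) -> ('I_n -> C),
    (forall k, min_can_N E (reps k)) /\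
    (forall k l, pair_equiv (reps k) (reps l) -> k = l) /\
    (forall x, min_can_N E x -> exists k, pair_equiv x (reps k)).
Proof.
move=> _ _ hE.
pose S := [set P : {set {set 'I_n}} | [exists Cc in components E, tripartition E Cc P]].
pose s := enum S.
have hsz : size s = num_tripartite E by rewrite num_trip_card -cardE.
have hSmem : forall P, P \in S -> exists i0, tripartition E (comp n E i0) P.
  move=> P; rewrite inE => /existsP[Cc /andP[hC ht]].
  by have [i0 hi0] := @comps_mem n E Cc hC; exists i0; rewrite -hi0.
have hnth : forall k : 'I_(num_tripartite E), nth set0 s k \in S.
  by move=> k; rewrite -mem_enum mem_nth // hsz.
exists (fun k => vec C n (nth set0 s k)); split; [|split].
- move=> k; have [i0 ht] := hSmem _ (hnth k).
  exact: (@vec_min C n E hE _ i0 ht).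
- move=> k l h; have := @fQ_equiv C n _ _ h.
  have [i0 ht0] := hSmem _ (hnth k); have [i1 ht1] := hSmem _ (hnth l).
  rewrite (@fQ_vec C n E _ i0 ht0) (@fQ_vec C n E _ i1 ht1) => /eqP.
  rewrite nth_uniq ?hsz ?enum_uniq // => /eqP hkl.
  exact: val_inj.
- move=> x hx.
  have [i0 hg] := @min_good C n E hE x hx.
  have [P [ht hpb]] := @classify_trip C n E hE x i0 hg (proj2 (proj2 hx)).
  have hPS : P \in S.
    rewrite inE; apply/existsP; exists (comp n E i0); rewrite ht andbT.
    by apply/imsetP; exists i0.
  have hidx : (index P s < num_tripartite E)%N by rewrite -hsz index_mem mem_enum.
  exists (Ordinal hidx) => /=.
  rewrite nth_index ?mem_enum //.
  exact: (@classify_equiv C n E hE x i0 P hg ht hpb).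
Qed.
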